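(* Let $A=(V,\mathcal E)$ be a finite tree (with at least one vertex). Consider the following three triples $(B,\mathcal R,G)\subset V\times\mathcal E\times V$ (more precisely $B\subseteq V$, $\mathcal R\subseteq \mathcal E$, $G\subseteq V$): (i) $B$ is the positive vertex-backbone of $A$, $\mathcal R$ is the set of exclusive edges of $A$, and $G$ is the negative vertex-backbone of $A$; (ii) $B$ is the set of unavoidable vertices of $A$, $\mathcal R$ is the positive edge-backbone of $A$, and $G$ is the set of optional vertices of $A$; (iii) a tricoloring $(B,\mathcal R,G)$ of $A$ such that: the edges in $\mathcal R$ are pairwise non-adjacent (share no end-vertex); every edge with one end-vertex in $G$ has its other end-vertex in $B$; and each vertex in $B$ is joined to vertices of $G$ by at least two edges. Then the triples defined in (i) and in (ii) are tricolorings of $A$, there is exactly one tricoloring of $A$ satisfying (iii), and these three tricolorings are one and the same.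
   Context: Graphs are simple (no loops, no multiple edges). A vertex cover of $A=(V,\mathcal E)$ is a subset of $V$ containing at least one end-vertex of every edge; a minimal vertex cover is one of smallest cardinality. The positive (resp. negative) vertex-backbone is the set of vertices belonging to every (resp. no) minimal vertex cover; the other vertices are called degenerate. An edge joining two degenerate vertices is called exclusive if no minimal vertex cover contains both of its end-vertices. A matching is a set of pairwise non-adjacent edges; a maximal matching is one of largest cardinality. The positive edge-backbone is the set of edges belonging to every maximal matching. A vertex is optional if there is a maximal matching none of whose edges has it as an end-vertex. A vertex is unavoidable if it is neither optional nor an end-vertex of an edge in the positive edge-backbone. A tricoloring of $A$ is a triple $(B,\mathcal R,G)$ with $B,G\subseteq V$ and $\mathcal R\subseteq\mathcal E$ such that $B$, $G$ and the set of end-vertices of edges in $\mathcal R$ form a partition of $V$ (parts allowed to be empty). *)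

(* Defs.v *)
(* A simple graph on a finite vertex type T is a symmetric,
   irreflexive relation e : rel T; an edge is the 2-element set {x, y}. *)
From mathcomp Require Import all_boot.
Set Implicit Arguments. Unset Strict Implicit. Unset Printing Implicit Defensive.

Section Graphs.
Variables (T : finType) (e : rel T).

Definition edges : {set {set T}} :=
  [set [set x; y] | x in T, y in T & e x y].

Definition connected_graph : Prop := forall x y : T, connect e x y.
Definition acyclic_graph : Prop :=
  forall s : seq T, uniq s -> 3 <= size s -> ~~ cycle e s.
Definition is_tree : Prop := 0 < #|T| /\ connected_graph /\ acyclic_graph.

(* Vertex covers and minimal (= minimum cardinality) vertex covers. *)
Definition vertex_cover (C : {set T}) : bool :=
  [forall f in edges, [exists v in f, v \in C]].
Definition min_vertex_cover (C : {set T}) : bool :=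
  vertex_cover C && [forall C' : {set T}, vertex_cover C' ==> (#|C| <= #|C'|)].

Definition pos_vertex_backbone : {set T} :=
  [set v | [forall C : {set T}, min_vertex_cover C ==> (v \in C)]].
Definition neg_vertex_backbone : {set T} :=
  [set v | [forall C : {set T}, min_vertex_cover C ==> (v \notin C)]].
Definition degenerate (v : T) : bool :=
  (v \notin pos_vertex_backbone) && (v \notin neg_vertex_backbone).
Definition exclusive_edges : {set {set T}} :=
  [set f in edges | [forall v in f, degenerate v] &&
                    [forall C : {set T}, min_vertex_cover C ==> ~~ (f \subset C)]].

(* Matchings and maximal (= maximum cardinality) matchings. *)
Definition matching (M : {set {set T}}) : bool :=
  (M \subset edges) &&
  [forall f in M, forall g in M, (f != g) ==> [disjoint f & g]].
Definition max_matching (M : {set {set T}}) : bool :=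
  matching M && [forall M' : {set {set T}}, matching M' ==> (#|M'| <= #|M|)].

Definition pos_edge_backbone : {set {set T}} :=
  [set f in edges | [forall M : {set {set T}}, max_matching M ==> (f \in M)]].
Definition optional (v : T) : bool :=
  [exists M : {set {set T}}, max_matching M && [forall f in M, v \notin f]].
Definition optional_vertices : {set T} := [set v | optional v].
Definition unavoidable_vertices : {set T} :=
  [set v | ~~ optional v && ~~ [exists f in pos_edge_backbone, v \in f]].

Definition ends (R : {set {set T}}) : {set T} := \bigcup_(f in R) f.
Definition tricoloring (B : {set T}) (R : {set {set T}}) (G : {set T}) : Prop :=
  R \subset edges /\ [disjoint B & G] /\ [disjoint B & ends R] /\
  [disjoint G & ends R] /\ B :|: ends R :|: G = [set: T].

Definition cond_iii (B : {set T}) (R : {set {set T}}) (G : {set T}) : Prop :=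
  (forall f g, f \in R -> g \in R -> f != g -> [disjoint f & g]) /\
  (forall x y, e x y -> x \in G -> y \in B) /\
  (forall b, b \in B -> 2 <= #|[set y in G | e b y]|).

End Graphs.

(* Main.v *)
Require Import Defs.
From mathcomp Require Import all_boot.
Set Implicit Arguments. Unset Strict Implicit. Unset Printing Implicit Defensive.

Lemma disjointP (U : finType) (A B : {set U}) :
  reflect (forall x, x \in A -> x \in B -> False) [disjoint A & B].
Proof.
rewrite disjoint_subset; apply: (iffP subsetP) => [h x xA xB|h x xA].
  by move: (h x xA); rewrite inE xB.
by rewrite inE; apply/negP => /(h x xA).
Qed.

Section Forest.
Variables (T : finType) (e : rel T).
Hypotheses (e_sym : symmetric e) (e_irr : irreflexive e) (acyc : acyclic_graph e).

Lemma leaf_aux k (S : {set T}) x s :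
  #|T| - size s <= k -> path e x s -> uniq (x :: s) -> all [in S] (x :: s) ->
  exists2 l, l \in S & #|[set y in S | e l y]| <= 1.
Proof.
elim: k x s => [|k IH] x s.
  move=> hk _ hu _; exfalso.
  move/card_uniqP: hu => h2; move: (max_card (mem (x :: s))).
  rewrite h2 /= => hh; move: hk; rewrite leqn0 subn_eq0 leqNgt; case/negP; exact: hh.
move=> hk hp hu ha.
case: (boolP [exists y, [&& y \in S, e x y & y \notin x :: s]]).
  case/existsP=> y /and3P[yS exy yn].
  apply: (IH y (x :: s)) => /=; first by rewrite subnS; move: hk; case: (#|T| - size s) => //.
  - by rewrite e_sym exy hp.
  - by apply/andP; split.
  - by apply/andP; split.
move=> hno.
have hx : x \in S by move: ha => /= /andP[].
exists x => //.
move: hno; case: s hk hp hu ha => [|a s'] hk hp hu ha hno.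
  rewrite (_ : [set y in S | e x y] = set0) ?cards0 //; apply/setP=> y; rewrite !inE.
  apply/negP => /andP[yS exy]; move/existsP: hno; apply; exists y.
  rewrite yS exy /= inE; apply/negP => /eqP yx; subst y.
  by rewrite e_irr in exy.
apply: (@leq_trans #|[set a]|); last by rewrite cards1.
apply: subset_leq_card; apply/subsetP => y; rewrite !inE => /andP[yS exy].
apply/negPn/negP => ya.
have yin : y \in x :: a :: s'.
  apply/negPn/negP => yn; move/existsP: hno; apply; exists y.
  by rewrite yS exy yn.
have yx : y != x by apply/negP=> /eqP yx; subst y; rewrite e_irr in exy.
have ys : y \in s' by move: yin; rewrite !inE (negPf yx) (negPf ya).
case/splitPr: ys hp hu => p1 p2 hp hu.
have hu' : uniq (x :: a :: rcons p1 y).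
  have : uniq ((x :: a :: rcons p1 y) ++ p2) by rewrite -cats1 /= -catA.
  by rewrite cat_uniq => /andP[].
have hc : cycle e (x :: a :: rcons p1 y).
  rewrite /cycle rcons_path -rcons_cons last_rcons e_sym exy andbT.
  have : path e x ((a :: p1) ++ y :: p2) by [].
  rewrite cat_path => /andP[h1 /= /andP[h2 _]].
  by move: h1 => /= /andP[-> h1]; rewrite rcons_path h1 h2.
have := acyc hu'; rewrite /= size_rcons => /(_ isT)/negP[]; exact: hc.
Qed.

Lemma leaf_exists (S : {set T}) x0 : x0 \in S ->
  exists2 l, l \in S & #|[set y in S | e l y]| <= 1.
Proof.
move=> x0S; apply: (leaf_aux (k := #|T|) (x := x0) (s := [::])) => //=.
  by rewrite subn0.
by rewrite x0S.
Qed.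

Lemma card_le1 (A : {set T}) : #|A| <= 1 -> A = set0 \/ exists p, A = [set p].
Proof.
case: (posnP #|A|) => [/eqP|]; first by rewrite cards_eq0 => /eqP; left.
move=> h1 h2; right; apply/cards1P; by rewrite eqn_leq h1 h2.
Qed.

Definition rooted (S : {set T}) r (par : T -> T) (h : T -> nat) (Z : {set T}) :=
 [/\ r \in Z, forall v, v \notin Z -> par v \in S /\ h (par v) < h v &
  forall x y, x \in S -> y \in S -> e x y ->
     (x \notin Z /\ par x = y) \/ (y \notin Z /\ par y = x)].

Lemma rooted_ex n : forall (S : {set T}) r, #|S| <= n -> exists par h Z, rooted S r par h Z.
Proof.
elim: n => [|n IH] S r hS.
  move: hS; rewrite leqn0 cards_eq0 => /eqP ->.
  exists id, (fun _ => 0), setT; split => //; first by move=> v; rewrite inE.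
  by move=> x y; rewrite inE.
case: (set_0Vmem S) => [->|[x0 x0S]].
  exists id, (fun _ => 0), setT; split => //; first by move=> v; rewrite inE.
  by move=> x y; rewrite inE.
have [l lS hl] := leaf_exists x0S.
have hS' : #|S :\ l| <= n by move: hS; rewrite (cardsD1 l S) lS.
have Nl : forall y, y \in S -> e l y -> y \in [set y in S | e l y] by move=> y yS ely; rewrite inE yS.
case: (card_le1 hl) => [N0 | [p Np]].
-
  have [par [h [Z [rZ hZ hE]]]] := IH _ r hS'.
  exists par, h, Z; split => //.
    by move=> v /hZ[pS hv]; split => //; move: pS; rewrite inE => /andP[].
  move=> x y xS yS exy.
  have xl : x != l.
    by apply/eqP=> xl; subst x; have := Nl _ yS exy; rewrite N0 inE.
  have yl : y != l.
    by apply/eqP=> yl; subst y; rewrite e_sym in exy; have := Nl _ xS exy; rewrite N0 inE.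
  by apply: hE; rewrite // !inE ?xl ?yl.
have pNl : p \in [set y in S | e l y] by rewrite Np inE.
have pS : p \in S by move: pNl; rewrite inE => /andP[].
have elp : e l p by move: pNl; rewrite inE => /andP[].
have pl : p != l by apply/eqP=> pl; subst p; rewrite e_irr in elp.
have onlyp : forall y, y \in S -> e l y -> y = p.
  by move=> y yS ely; have := Nl _ yS ely; rewrite Np inE => /eqP.
case: (eqVneq l r) => [lr | lr].
- subst r.
  have [par [h [Z [rZ hZ hE]]]] := IH _ p hS'.
  exists (fun v => if v == p then l else par v), (fun v => if v == l then 0 else (h v).+1),
    (l |: (Z :\ p)); split.
  + by rewrite !inE eqxx.
  + move=> v; rewrite !inE negb_or negb_and negbK => /andP[vl /orP[/eqP vp|vZ]].
      by subst v; rewrite eqxx lS eqxx (negPf pl).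
    have vp : v != p by apply/eqP=> vp; subst v; rewrite rZ in vZ.
    rewrite (negPf vp) (negPf vl); have [hp hv] := hZ _ vZ.
    move: hp; rewrite !inE => /andP[pvl ->]; by rewrite (negPf pvl).
  + move=> x y xS yS exy.
    case: (eqVneq x l) => [xl|xl].
      subst x; have yp := onlyp _ yS exy; subst y.
      by right; rewrite !inE eqxx (negPf pl).
    case: (eqVneq y l) => [yl|yl].
      subst y; rewrite e_sym in exy; have xp := onlyp _ xS exy; subst x.
      by left; rewrite !inE eqxx (negPf pl).
    have := hE x y; rewrite !inE xl yl xS yS => /(_ isT isT exy).
    case=> [[xZ px]|[yZ py]].
      have xp : x != p by apply/eqP=> xp; subst x; rewrite rZ in xZ.
      by left; rewrite (negPf xl) (negPf xp) xZ.
    have yp : y != p by apply/eqP=> yp; subst y; rewrite rZ in yZ.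
    by right; rewrite (negPf yl) (negPf yp) yZ.
- have [par [h [Z [rZ hZ hE]]]] := IH _ r hS'.
  exists (fun v => if v == l then p else par v), (fun v => if v == l then (h p).+1 else h v),
    (Z :\ l); split.
  + by rewrite !inE eq_sym lr.
  + move=> v; rewrite !inE negb_and negbK; case: (eqVneq v l) => [vl|vl] /= vZ.
      by subst v; rewrite pS (negPf pl).
    have [hp hv] := hZ _ vZ.
    move: hp; rewrite !inE => /andP[pvl ->]; by rewrite (negPf pvl).
  + move=> x y xS yS exy.
    case: (eqVneq x l) => [xl|xl].
      subst x; have yp := onlyp _ yS exy; subst y.
      by left; rewrite !inE eqxx.
    case: (eqVneq y l) => [yl|yl].
      subst y; rewrite e_sym in exy; have xp := onlyp _ xS exy; subst x.
      by right; rewrite !inE eqxx.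
    have := hE x y; rewrite !inE xl yl xS yS => /(_ isT isT exy).
    case=> [[xZ px]|[yZ py]].
      by left; rewrite xZ.
    by right; rewrite yZ.
Qed.


Lemma mem_ends (R : {set {set T}}) x : (x \in ends R) = [exists f in R, x \in f].
Proof.
apply/bigcupP/existsP => [[f fR xf]|[f /andP[fR xf]]]; last by exists f.
by exists f; rewrite fR.
Qed.

Lemma ends_U1 (R : {set {set T}}) f x : (x \in ends (f |: R)) = (x \in f) || (x \in ends R).
Proof.
rewrite !mem_ends; apply/existsP/orP => [[g /andP[]]|[xf|/existsP[g /andP[gR xg]]]].
- rewrite !inE => /orP[/eqP->|gR] xg; first by left.
  by right; apply/existsP; exists g; rewrite gR.
- by exists f; rewrite !inE eqxx.
- by exists g; rewrite !inE gR orbT.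
Qed.

Lemma ends0 x : (x \in ends (set0 : {set {set T}})) = false.
Proof. by rewrite mem_ends; apply/existsP => [[f]]; rewrite inE. Qed.

Lemma mem_edges x y : e x y -> [set x; y] \in edges e.
Proof. by move=> exy; apply/imset2P; exists x y; rewrite // inE. Qed.

Record goodc (S B : {set T}) (R : {set {set T}}) (G : {set T}) : Prop := Goodc {
  gc_edges : R \subset edges e;
  gc_part : forall x, (x \in S) = [|| x \in B, x \in ends R | x \in G];
  gc_B : forall x, x \in B -> (x \notin ends R) && (x \notin G);
  gc_G : forall x, x \in G -> x \notin ends R;
  gc_disj : forall f g, f \in R -> g \in R -> f != g -> [disjoint f & g];
  gc_GB : forall x y, e x y -> x \in S -> y \in S -> x \in G -> y \in B;
  gc_cnt : forall b, b \in B -> 2 <= #|[set y in G | e b y]| }.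

Lemma goodc_ex n : forall (S : {set T}), #|S| <= n -> exists B R G, goodc S B R G.
Proof.
elim: n => [|n IH] S hS.
  move: hS; rewrite leqn0 cards_eq0 => /eqP ->.
  exists set0, set0, set0; split => //; try by move=> x; rewrite ?inE ?ends0.
  by apply/subsetP=> f; rewrite inE.
case: (set_0Vmem S) => [->|[x0 x0S]].
  exists set0, set0, set0; split => //; try by move=> x; rewrite ?inE ?ends0.
  by apply/subsetP=> f; rewrite inE.
have [l lS hl] := leaf_exists x0S.
have hS' : #|S :\ l| <= n by move: hS; rewrite (cardsD1 l S) lS.
have Nl : forall y, y \in S -> e l y -> y \in [set y in S | e l y] by move=> y yS ely; rewrite inE yS.
case: (card_le1 hl) => [N0 | [p Np]].
- have [B [R [G [gE gP gB gG gD gGB gC]]]] := IH _ hS'.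
  have inS : forall x, [|| x \in B, x \in ends R | x \in G] -> x \in S :\ l by move=> x; rewrite gP.
  have nl : forall y, y \in S -> e l y -> False.
    by move=> y yS ely; have := Nl _ yS ely; rewrite N0 inE.
  exists B, R, (l |: G); split => //.
  + move=> x; case: (eqVneq x l) => [->|xl]; first by rewrite lS !inE eqxx !orbT.
    by rewrite in_setU1 (negPf xl) /= -gP !inE xl.
  + move=> x xB; have := inS x; rewrite xB => /(_ isT); rewrite !inE => /andP[xl _].
    by rewrite (negPf xl) /=; apply: gB.
  + move=> x; rewrite in_setU1 => /orP[/eqP->|]; last exact: gG.
    by apply/negP=> lR; have := inS l; rewrite lR orbT => /(_ isT); rewrite !inE eqxx.
  + move=> x y exy xS yS; rewrite in_setU1 => /orP[/eqP xl|xG].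
      by subst x; case: (nl _ yS exy).
    case: (eqVneq y l) => [yl|yl]; first by subst y; rewrite e_sym in exy; case: (nl _ xS exy).
    have := inS x; rewrite xG !orbT => /(_ isT) xS'.
    by apply: (gGB x y exy) => //; rewrite !inE yl.
  + move=> b bB; apply: (leq_trans (gC b bB)); apply: subset_leq_card.
    by apply/subsetP=> y; rewrite !inE => /andP[-> ->]; rewrite orbT.
have pNl : p \in [set y in S | e l y] by rewrite Np inE.
have pS : p \in S by move: pNl; rewrite inE => /andP[].
have elp : e l p by move: pNl; rewrite inE => /andP[].
have pl : p != l by apply/eqP=> pl; subst p; rewrite e_irr in elp.
have onlyp : forall y, y \in S -> e l y -> y = p.
  by move=> y yS ely; have := Nl _ yS ely; rewrite Np inE => /eqP.
have hS'' : #|S :\ l :\ p| <= n.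
  apply: leq_trans hS'; apply: subset_leq_card; apply/subsetP=> x; rewrite !inE.
  by case/and3P=> _ -> ->.
have [B [R [G [gE gP gB gG gD gGB gC]]]] := IH _ hS''.
have inS : forall x, [|| x \in B, x \in ends R | x \in G] ->
    [/\ x != p, x != l & x \in S] by move=> x; rewrite -gP !inE => /and3P[].
case: (boolP [exists g in G, e p g]) => [/existsP[g /andP[gGg epg]] | hno].
- exists (p |: B), R, (l |: G); split => //.
  + move=> x; case: (eqVneq x l) => [->|xl]; first by rewrite lS !inE eqxx !orbT.
    case: (eqVneq x p) => [->|xp]; first by rewrite pS in_setU1 eqxx.
    by rewrite ?in_setU1 (negPf xl) (negPf xp) /= -gP !inE xl xp.
  + move=> x; rewrite in_setU1 => /orP[/eqP->|xB].
      rewrite !inE (negPf pl) /=; apply/andP; split; apply/negP => h;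
        by have := inS p; rewrite h ?orbT => /(_ isT)[]; rewrite eqxx.
    have := inS x; rewrite xB => /(_ isT)[_ xl _].
    by rewrite !inE (negPf xl) /=; apply: gB.
  + move=> x; rewrite in_setU1 => /orP[/eqP->|]; last exact: gG.
    by apply/negP=> lR; have := inS l; rewrite lR orbT => /(_ isT)[_]; rewrite eqxx.
  + move=> x y exy xS yS; rewrite in_setU1 => /orP[/eqP xl|xG].
      by subst x; rewrite (onlyp _ yS exy) in_setU1 eqxx.
    have := inS x; rewrite xG !orbT => /(_ isT)[xp xl xS''].
    case: (eqVneq y l) => [yl|yl].
      by subst y; rewrite e_sym in exy; have := onlyp _ xS exy => xp'; rewrite xp' eqxx in xp.
    case: (eqVneq y p) => [->|yp]; first by rewrite in_setU1 eqxx.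
    rewrite in_setU1 (negPf yp) /=.
    by apply: (gGB x y exy); rewrite ?inE ?yl ?yp ?xl ?xp ?xS ?yS.
  + move=> b; rewrite in_setU1 => /orP[/eqP->|bB].
      have gl : g != l by have := inS g; rewrite gGg !orbT => /(_ isT)[_ ->].
      apply: (@leq_trans #|[set l; g]|); first by rewrite cards2 eq_sym gl.
      apply: subset_leq_card; apply/subsetP=> y; rewrite !inE => /orP[]/eqP->.
        by rewrite eqxx e_sym elp.
      by rewrite gGg epg orbT.
    apply: (leq_trans (gC b bB)); apply: subset_leq_card.
    by apply/subsetP=> y; rewrite !inE => /andP[-> ->]; rewrite orbT.
- exists B, ([set l; p] |: R), G; split => //.
  + apply/subsetP=> f; rewrite in_setU1 => /orP[/eqP->|fR]; first exact: mem_edges.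
    exact: (subsetP gE).
  + move=> x; rewrite ends_U1.
    case: (eqVneq x l) => [->|xl]; first by rewrite lS !inE eqxx !orbT.
    case: (eqVneq x p) => [->|xp]; first by rewrite pS !inE eqxx !orbT.
    by rewrite in_set2 (negPf xl) (negPf xp) /= -gP !inE xl xp.
  + move=> x xB; rewrite ends_U1 !inE.
    have := inS x; rewrite xB => /(_ isT)[xp xl _].
    by rewrite (negPf xl) (negPf xp) /=; apply: gB.
  + move=> x xG; rewrite ends_U1 !inE.
    have := inS x; rewrite xG !orbT => /(_ isT)[xp xl _].
    by rewrite (negPf xl) (negPf xp) /=; apply: gG.
  + have hsep : forall g, g \in R -> [disjoint [set l; p] & g].
      move=> g gR; apply/disjointP=> z; rewrite !inE => /orP[]/eqP-> zg.
        have := inS l; rewrite (_ : l \in ends R) ?orbT; last first.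
          by rewrite mem_ends; apply/existsP; exists g; rewrite gR.
        by move=> /(_ isT)[_]; rewrite eqxx.
      have := inS p; rewrite (_ : p \in ends R) ?orbT; last first.
        by rewrite mem_ends; apply/existsP; exists g; rewrite gR.
      by move=> /(_ isT)[]; rewrite eqxx.
    move=> f g; rewrite !inE => /orP[/eqP->|fR] /orP[/eqP->|gR].
    * by rewrite eqxx.
    * by move=> _; apply: hsep.
    * by move=> _; rewrite disjoint_sym; apply: hsep.
    * exact: gD.
  + move=> x y exy xS yS xG.
    have := inS x; rewrite xG !orbT => /(_ isT)[xp xl xS''].
    case: (eqVneq y l) => [yl|yl].
      by subst y; rewrite e_sym in exy; have := onlyp _ xS exy => xp'; rewrite xp' eqxx in xp.
    case: (eqVneq y p) => [yp|yp].
      subst y; case/negP: hno; apply/existsP; exists x; by rewrite xG e_sym exy.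
    by apply: (gGB x y exy); rewrite ?inE ?yl ?yp ?xl ?xp ?xS ?yS.
Qed.


Lemma matchingP (M : {set {set T}}) : matching e M ->
  M \subset edges e /\ forall f g, f \in M -> g \in M -> f != g -> [disjoint f & g].
Proof.
case/andP=> sub /forall_inP h; split => // f g fM gM fg.
by move/forall_inP: (h f fM) => /(_ g gM) /implyP; apply.
Qed.

Lemma matchingI (M : {set {set T}}) : M \subset edges e ->
  (forall f g, f \in M -> g \in M -> f != g -> [disjoint f & g]) -> matching e M.
Proof.
move=> sub h; apply/andP; split => //; apply/forall_inP => f fM; apply/forall_inP => g gM.
by apply/implyP; apply: h.
Qed.

Lemma same_in_matching M f g x : matching e M -> f \in M -> g \in M ->
  x \in f -> x \in g -> f = g.
Proof.
case/matchingP=> _ h fM gM xf xg; apply/eqP/negPn/negP => fg.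
by move/disjointP: (h f g fM gM fg) => /(_ x xf xg).
Qed.

Lemma vcP (C : {set T}) : vertex_cover e C -> forall x y, e x y -> (x \in C) || (y \in C).
Proof.
move/forall_inP => h x y exy; have := h _ (mem_edges exy).
by case/exists_inP => v; rewrite !inE => /orP[]/eqP-> ->; rewrite ?orbT.
Qed.

Lemma vcI (C : {set T}) : (forall x y, e x y -> (x \in C) || (y \in C)) -> vertex_cover e C.
Proof.
move=> h; apply/forall_inP => f /imset2P[x y _]; rewrite inE => exy ->.
apply/exists_inP; case/orP: (h x y exy) => ?; [exists x | exists y]; by rewrite // !inE eqxx ?orbT.
Qed.

Lemma edge_other f w : f \in edges e -> w \in f -> exists2 z, e w z & f = [set w; z].
Proof.
case/imset2P=> x y _; rewrite inE => exy ->; rewrite !inE => /orP[]/eqP->.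
  by exists y.
by exists x; rewrite 1?e_sym // setUC.
Qed.

Lemma two_set (x y a b c : T) : a \in [set x; y] -> b \in [set x; y] -> c \in [set x; y] ->
  a != b -> c != a -> c = b.
Proof.
by rewrite !in_set2 => /orP[]/eqP-> /orP[]/eqP-> /orP[]/eqP->; rewrite ?eqxx.
Qed.

Lemma match_cover (M : {set {set T}}) (C : {set T}) : matching e M -> vertex_cover e C ->
  #|M| <= #|C| /\ (#|C| <= #|M| ->
   (forall c, c \in C -> exists2 f, f \in M & c \in f) /\
   (forall f x y, f \in M -> x \in f -> y \in f -> x \in C -> y \in C -> x = y)).
Proof.
move=> hM hC; have [sub hD] := matchingP hM.
case: (set_0Vmem M) => [M0|[f0 f0M]].
  subst M; rewrite cards0; split => // hC0.
  have C0 : C = set0 by apply/eqP; rewrite -cards_eq0 -leqn0.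
  by subst C; split => [c|f]; rewrite inE.
have [x0 _ _ _ _] := imset2P (subsetP sub _ f0M).
pose psi f := odflt x0 [pick v in f :&: C].
have psiP : forall f, f \in M -> psi f \in f /\ psi f \in C.
  move=> f fM; case/imset2P: (subsetP sub _ fM) => x y _; rewrite inE => exy fxy.
  rewrite /psi; case: pickP => [v|none]; first by rewrite inE => /andP.
  case/orP: (vcP hC exy) => hx; [move: (none x) | move: (none y)];
    by rewrite !inE fxy !inE eqxx ?orbT hx.
have psi_inj : {in M &, injective psi}.
  move=> f g fM gM eq; apply: (same_in_matching (x := psi f) hM fM gM).
    by case: (psiP f fM).
  by rewrite eq; case: (psiP g gM).
have subC : psi @: M \subset C.
  by apply/subsetP=> v /imsetP[f fM ->]; case: (psiP f fM).
split; first by rewrite -(card_in_imset psi_inj); apply: subset_leq_card.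
move=> hle.
have EqC : psi @: M = C by apply/eqP; rewrite eqEcard subC card_in_imset.
split.
  move=> c; rewrite -EqC => /imsetP[f fM ->]; exists f => //; by case: (psiP f fM).
have key : forall f x, f \in M -> x \in f -> x \in C -> x = psi f.
  move=> f x fM xf; rewrite -EqC => /imsetP[g gM xg].
  have : x \in g by rewrite xg; case: (psiP g gM).
  by move=> xg'; rewrite xg (same_in_matching hM fM gM xf xg').
by move=> f x y fM xf yf xC yC; rewrite (key f x) // (key f y).
Qed.

Lemma minvcP (C : {set T}) : reflect (vertex_cover e C /\ forall C', vertex_cover e C' -> #|C| <= #|C'|)
  (min_vertex_cover e C).
Proof.
apply: (iffP andP) => [[h /forallP h2]|[h h2]]; split => //.
  by move=> C' hC'; move/implyP: (h2 C'); apply.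
by apply/forallP=> C'; apply/implyP; apply: h2.
Qed.

Lemma maxmP (M : {set {set T}}) : reflect (matching e M /\ forall M', matching e M' -> #|M'| <= #|M|)
  (max_matching e M).
Proof.
apply: (iffP andP) => [[h /forallP h2]|[h h2]]; split => //.
  by move=> M' hM'; move/implyP: (h2 M'); apply.
by apply/forallP=> M'; apply/implyP; apply: h2.
Qed.


Section Char.
Variables (B G : {set T}) (R : {set {set T}}).
Hypothesis hg : goodc setT B R G.

Let k := #|B| + #|R|.

Lemma partV x : [|| x \in B, x \in ends R | x \in G].
Proof. by rewrite -(gc_part hg) inE. Qed.
Lemma BnW x : x \in B -> x \notin ends R.
Proof. by case/(gc_B hg)/andP. Qed.
Lemma BnG x : x \in B -> x \notin G.
Proof. by case/(gc_B hg)/andP. Qed.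
Lemma GnW x : x \in G -> x \notin ends R.
Proof. exact: (gc_G hg). Qed.
Lemma GBe x y : e x y -> x \in G -> y \in B.
Proof. by move=> exy; apply: (gc_GB hg) exy _ _; rewrite inE. Qed.
Lemma RinW f x : f \in R -> x \in f -> x \in ends R.
Proof. by move=> fR xf; rewrite mem_ends; apply/existsP; exists f; rewrite fR. Qed.
Lemma Redge f : f \in R -> f \in edges e.
Proof. exact: (subsetP (gc_edges hg)). Qed.
Lemma R_uniq f g x : f \in R -> g \in R -> x \in f -> x \in g -> f = g.
Proof.
move=> fR gR xf xg; apply/eqP/negPn/negP => fg.
by move/disjointP: (gc_disj hg fR gR fg) => /(_ x xf xg).
Qed.
Lemma W_R x : x \in ends R -> exists2 f, f \in R & x \in f.
Proof. by rewrite mem_ends => /existsP[f /andP[]]; exists f. Qed.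

Lemma phi_match r par h Z : rooted setT r par h Z -> exists M : {set {set T}},
  [/\ matching e M, k <= #|M|, R \subset M &
   forall f, f \in M -> f \notin R -> exists b g, [/\ b \in B, g \in G, g != r & f = [set b; g]]].
Proof.
case=> rZ hZ hE.
have hphi : forall b, b \in B -> exists y, [&& y \in G, e b y, y \notin Z & par y == b].
  move=> b bB.
  have : ~~ ([set y in G | e b y] \subset [set par b]).
    apply/negP => /subset_leq_card; rewrite cards1 => h1.
    by have := gc_cnt hg bB; rewrite leqNgt ltnS h1.
  case/subsetPn => y; rewrite !inE => /andP[yG eby] ypb.
  exists y; rewrite yG eby /=.
  have := hE b y; rewrite !inE => /(_ isT isT eby) [[_ pb]|[-> /eqP ->]] //.
  by rewrite pb eqxx in ypb.
pose phi b := odflt b [pick y | [&& y \in G, e b y, y \notin Z & par y == b]].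
have phiP : forall b, b \in B -> [/\ phi b \in G, e b (phi b), phi b \notin Z & par (phi b) = b].
  move=> b bB; rewrite /phi; case: pickP => [y /and4P[? ? ? /eqP ?] //|none].
  by have [y] := hphi b bB; rewrite none.
pose P := [set [set b; phi b] | b in B].
have Pinj : {in B &, injective (fun b => [set b; phi b])}.
  move=> b1 b2 b1B b2B eq.
  have : b1 \in [set b2; phi b2] by rewrite -eq !inE eqxx.
  rewrite !inE => /orP[/eqP //|/eqP b1p].
  by have [g2G _ _ _] := phiP b2 b2B; move: (BnG b1B); rewrite b1p g2G.
have RP : [disjoint R & P].
  apply/disjointP => f fR /imsetP[b bB fb].
  have : b \in f by rewrite fb !inE eqxx.
  by move/(RinW fR); rewrite (negPf (BnW bB)).
exists (R :|: P); split.
- apply: matchingI.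
    apply/subsetP=> f; rewrite inE => /orP[/Redge //|/imsetP[b bB ->]].
    by apply: mem_edges; case: (phiP b bB).
  move=> f g; rewrite !inE => /orP[fR|/imsetP[b1 b1B ->]] /orP[gR|/imsetP[b2 b2B ->]] fg.
  + exact: (gc_disj hg).
  + apply/disjointP=> z /(RinW fR) zW; rewrite !inE => /orP[]/eqP zb; subst z.
      by rewrite (negPf (BnW b2B)) in zW.
    by have [gG _ _ _] := phiP b2 b2B; rewrite (negPf (GnW gG)) in zW.
  + apply/disjointP=> z; rewrite !inE => /orP[]/eqP zb /(RinW gR) zW; subst z.
      by rewrite (negPf (BnW b1B)) in zW.
    by have [gG _ _ _] := phiP b1 b1B; rewrite (negPf (GnW gG)) in zW.
  + have b12 : b1 != b2 by apply/eqP=> b12; subst b2; rewrite eqxx in fg.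
    have [g1G _ _ p1] := phiP b1 b1B; have [g2G _ _ p2] := phiP b2 b2B.
    apply/disjointP=> z; rewrite !inE => /orP[]/eqP-> /orP[]/eqP.
    * by move=> b12'; rewrite b12' eqxx in b12.
    * by move=> b1p; move: (BnG b1B); rewrite b1p g2G.
    * by move=> pb2; move: (BnG b2B); rewrite -pb2 g1G.
    * by move=> pp; move: b12; rewrite -p1 pp p2 eqxx.
- rewrite /k; move: (leq_card_setU R P) => [_]; rewrite RP => /eqP ->.
  by rewrite card_in_imset // addnC.
- exact: subsetUl.
- move=> f; rewrite inE => /orP[-> //|/imsetP[b bB ->]] _.
  have [gG _ gZ _] := phiP b bB; exists b, (phi b); split => //.
  by apply/eqP=> gr; rewrite gr rZ in gZ.
Qed.


Lemma cover_X u par h Z : rooted setT u par h Z -> exists X : {set T},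
  [/\ vertex_cover e (B :|: X), #|B :|: X| <= k, (u \in ends R -> u \in X) &
   forall v, v \in ends R -> e u v -> [set u; v] \notin R -> v \in X].
Proof.
case=> uZ hZ hE.
have hE' : forall x y, e x y -> (x \notin Z /\ par x = y) \/ (y \notin Z /\ par y = x).
  by move=> x y; apply: hE; rewrite inE.
have nofix : forall x, x \notin Z -> par x != x.
  by move=> x xZ; apply/eqP=> px; have [_] := hZ x xZ; rewrite px ltnn.
have no2 : forall x y, x \notin Z -> y \notin Z -> par x = y -> par y = x -> False.
  move=> x y xZ yZ pxy pyx; have [_ h1] := hZ x xZ; have [_ h2] := hZ y yZ.
  by move: h1 h2; rewrite pxy pyx => h1 h2; have := ltn_trans h1 h2; rewrite ltnn.
pose up (f : {set T}) := odflt u [pick w in f | [exists w' in f, (w' \notin Z) && (par w' == w)]].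
have upP : forall f w w', f \in R -> w \in f -> w' \in f -> w' \notin Z -> par w' = w -> up f = w.
  move=> f w w' fR wf w'f w'Z pw.
  have [x [y [exy fxy]]] : exists x y, e x y /\ f = [set x; y].
    by case/imset2P: (Redge fR) => x y _; rewrite inE => exy ->; exists x, y.
  rewrite /up; case: pickP => [w1 /andP[w1f /exists_inP[w1' w1'f /andP[w1'Z /eqP pw1]]]|none]; last first.
    by move: (none w); rewrite wf /= => /negbT/negP[]; apply/exists_inP; exists w'; rewrite // w'Z pw eqxx.
  apply/eqP/negPn/negP => w1w.
  have ww' : w != w' by rewrite -pw nofix.
  rewrite fxy in wf w'f w1f w1'f.
  have e1 : w1 = w' by apply: (two_set wf w'f w1f).
  rewrite e1 in pw1.
  have w1'w1 : w1' != w' by rewrite -pw1 eq_sym nofix.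
  have e2 : w1' = w by apply: (two_set w'f wf w1'f); rewrite // eq_sym.
  rewrite e2 in w1'Z pw1.
  exact: (no2 _ _ w'Z w1'Z pw pw1).
pose X := [set up f | f in R].
have child : forall x y, e x y -> y \notin Z -> par y = x -> y \in ends R ->
    [set x; y] \notin R -> y \in X.
  move=> x y exy yZ pyx yW xyR.
  have [fy fyR yfy] := W_R yW.
  have [y' eyy' fyE] := edge_other (Redge fyR) yfy.
  case: (hE' _ _ eyy') => [[_ pyy']|[y'Z py'y]].
    by move: xyR; rewrite -pyx pyy' setUC -fyE fyR.
  apply/imsetP; exists fy => //; symmetry; apply: (upP _ _ y') => //.
  by rewrite fyE !inE eqxx orbT.
have rootX : forall f x y, f \in R -> x \in f -> y \in f -> y \notin Z -> par y = x -> x \in X.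
  move=> f x y fR xf yf yZ pyx; apply/imsetP; exists f => //; symmetry; exact: (upP _ _ y).
exists X; split.
- apply: vcI => x y exy; rewrite !inE.
  case/or3P: (partV x) => [-> //|xW|xG]; last by rewrite (GBe exy xG) orbT.
  case/or3P: (partV y) => [-> |yW|yG]; first by rewrite !orbT.
    have xyE : [set x; y] \in edges e by apply: mem_edges.
    case: (boolP ([set x; y] \in R)) => xyR.
      case: (hE' _ _ exy) => [[xZ pxy]|[yZ pyx]].
        by rewrite (rootX _ y x xyR) ?orbT // !inE eqxx ?orbT.
      by rewrite (rootX _ x y xyR) ?orbT // !inE eqxx ?orbT.
    case: (hE' _ _ exy) => [[xZ pxy]|[yZ pyx]].
      have xyR' : [set y; x] \notin R by rewrite setUC.
      by rewrite (child y x) ?orbT // e_sym.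
    by rewrite (child x y) ?orbT.
  by rewrite e_sym in exy; rewrite (GBe exy yG).
- apply: (leq_trans (leq_card_setU B X).1); rewrite leq_add2l; exact: leq_imset_card.
- move=> uW; have [fu fuR ufu] := W_R uW.
  have [u' euu' fuE] := edge_other (Redge fuR) ufu.
  case: (hE' _ _ euu') => [[]|[u'Z pu'u]]; first by rewrite uZ.
  by apply: (rootX fu u u') => //; rewrite fuE !inE eqxx ?orbT.
- move=> v vW euv uvR.
  case: (hE' _ _ euv) => [[]|[vZ pvu]]; first by rewrite uZ.
  exact: (child u v).
Qed.

Lemma empty_case : (forall x : T, false) -> #|B| = 0 /\ #|R| = 0.
Proof.
move=> none; split; apply/eqP; rewrite cards_eq0; apply/eqP/setP=> x; rewrite inE.
  by have := none x.
by apply/negP=> /Redge /imset2P[y _ _ _ _]; have := none y.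
Qed.

Lemma some_M : exists M, matching e M /\ k <= #|M|.
Proof.
case: (pickP (fun x : T => true)) => [r _|none0]; last have none : forall x : T, false by move=> x; have := none0 x.
  have [par [h [Z rt]]] := rooted_ex r (leqnn #|[set: T]|).
  by have [M [? ? _ _]] := phi_match rt; exists M.
have [h1 h2] := empty_case none; exists set0; rewrite /k h1 h2; split => //.
by apply: matchingI => [|f]; rewrite ?sub0set // inE.
Qed.

Lemma some_C : exists C, vertex_cover e C /\ #|C| <= k.
Proof.
case: (pickP (fun x : T => true)) => [r _|none0]; last have none : forall x : T, false by move=> x; have := none0 x.
  have [par [h [Z rt]]] := rooted_ex r (leqnn #|[set: T]|).
  by have [X [? ? _ _]] := cover_X rt; exists (B :|: X).
exists set0; rewrite cards0; split => //; apply: (@vcI set0) => x; by have := none x.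
Qed.

Lemma matching_le M : matching e M -> #|M| <= k.
Proof.
move=> hM; have [C [hC Ck]] := some_C; apply: leq_trans Ck.
by case: (match_cover hM hC).
Qed.

Lemma cover_ge C : vertex_cover e C -> k <= #|C|.
Proof.
move=> hC; have [M [hM Mk]] := some_M; apply: leq_trans Mk _.
by case: (match_cover hM hC).
Qed.

Lemma maxm_ge M : max_matching e M -> k <= #|M|.
Proof.
case/maxmP=> _ h; have [M0 [hM0 M0k]] := some_M; exact: leq_trans M0k (h _ hM0).
Qed.

Lemma maxmI M : matching e M -> k <= #|M| -> max_matching e M.
Proof.
move=> hM kM; apply/maxmP; split => // M' hM'; exact: leq_trans (matching_le hM') kM.
Qed.

Lemma minvc_le C : min_vertex_cover e C -> #|C| <= k.
Proof.
case/minvcP=> _ h; have [C0 [hC0 C0k]] := some_C; exact: leq_trans (h _ hC0) C0k.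
Qed.

Lemma minvcI C : vertex_cover e C -> #|C| <= k -> min_vertex_cover e C.
Proof.
move=> hC Ck; apply/minvcP; split => // C' hC'; exact: leq_trans Ck (cover_ge hC').
Qed.

Lemma keyK M C : max_matching e M -> min_vertex_cover e C ->
   (forall c, c \in C -> exists2 f, f \in M & c \in f) /\
   (forall f x y, f \in M -> x \in f -> y \in f -> x \in C -> y \in C -> x = y).
Proof.
move=> hM hC; have hM' := hM; have hC' := hC.
case/maxmP: hM' => hMm _; case/minvcP: hC' => hCv _.
case: (match_cover hMm hCv) => _; apply; exact: leq_trans (minvc_le hC) (maxm_ge hM).
Qed.

Lemma some_minC : exists C, min_vertex_cover e C.
Proof. by have [C [hC Ck]] := some_C; exists C; apply: minvcI. Qed.

Lemma G_notin g C : g \in G -> min_vertex_cover e C -> g \notin C.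
Proof.
move=> gG hC; apply/negP => gC.
have [par [h [Z rt]]] := rooted_ex g (leqnn #|[set: T]|).
have [M [hM kM _ hP]] := phi_match rt.
have [hA _] := keyK (maxmI hM kM) hC; have [f fM gf] := hA _ gC.
case: (boolP (f \in R)) => fR.
  by move: (GnW gG); rewrite (RinW fR gf).
have [b [g' [bB g'G g'g fE]]] := hP f fM fR.
move: gf; rewrite fE !inE => /orP[]/eqP gE.
  by move: (BnG bB); rewrite -gE gG.
by rewrite gE eqxx in g'g.
Qed.

Lemma B_in b C : b \in B -> min_vertex_cover e C -> b \in C.
Proof.
move=> bB hC.
have : 0 < #|[set y in G | e b y]| by apply: leq_trans (gc_cnt hg bB).
case/card_gt0P => y; rewrite inE => /andP[yG eby].
have [hCv _] := minvcP _ hC.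
by case/orP: (vcP hCv eby) => // yC; move: (G_notin yG hC); rewrite yC.
Qed.

Lemma W_one C f x y : min_vertex_cover e C -> f \in R -> x \in f -> y \in f ->
  x \in C -> y \in C -> x = y.
Proof.
move=> hC fR xf yf xC yC.
have [par [h [Z rt]]] := rooted_ex x (leqnn #|[set: T]|).
have [M [hM kM RM _]] := phi_match rt.
have [_ hK] := keyK (maxmI hM kM) hC.
by apply: (hK f) => //; exact: (subsetP RM).
Qed.

Lemma W_in u : u \in ends R -> exists2 C, min_vertex_cover e C & u \in C.
Proof.
move=> uW; have [par [h [Z rt]]] := rooted_ex u (leqnn #|[set: T]|).
have [X [hX Xk uX _]] := cover_X rt.
by exists (B :|: X); [apply: minvcI | rewrite inE uX ?orbT].
Qed.

Lemma W_partner u : u \in ends R -> exists u', [/\ u' \in ends R, e u u' & [set u; u'] \in R].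
Proof.
move=> uW; have [fu fuR ufu] := W_R uW.
have [u' euu' fuE] := edge_other (Redge fuR) ufu.
exists u'; split => //; last by rewrite -fuE.
by apply: (RinW fuR); rewrite fuE !inE eqxx orbT.
Qed.

Lemma W_out u : u \in ends R -> exists2 C, min_vertex_cover e C & u \notin C.
Proof.
move=> uW; have [u' [u'W euu' uu'R]] := W_partner uW.
have [C hC u'C] := W_in u'W; exists C => //; apply/negP => uC.
have uu' := W_one hC uu'R (_ : u \in _) (_ : u' \in _) uC u'C.
by move: euu'; rewrite uu' ?e_irr // !inE eqxx ?orbT.
Qed.

Lemma W_edge u v : u \in ends R -> v \in ends R -> e u v -> [set u; v] \notin R ->
  exists C, [/\ min_vertex_cover e C, u \in C & v \in C].
Proof.
move=> uW vW euv uvR; have [par [h [Z rt]]] := rooted_ex u (leqnn #|[set: T]|).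
have [X [hX Xk uX vX]] := cover_X rt.
by exists (B :|: X); split; [apply: minvcI | rewrite inE uX ?orbT | rewrite inE vX ?orbT].
Qed.

Lemma R_in_max M : max_matching e M -> R \subset M.
Proof.
move=> hM; have hMm : matching e M by case/maxmP: hM.
have covered : forall w, w \in ends R -> exists2 f, f \in M & w \in f.
  move=> w wW; have [C hC wC] := W_in wW; have [hA _] := keyK hM hC; exact: hA.
have inside : forall w f z, w \in ends R -> f \in M -> f = [set w; z] -> e w z -> z \in ends R.
  move=> w f z wW fM fE ewz; case/or3P: (partV z) => [zB|//|zG].
    have [C hC wC] := W_in wW; have zC := B_in zB hC.
    have [_ hK] := keyK hM hC.
    have wz := hK f w z fM (_ : w \in _) (_ : z \in _) wC zC.
    by move: (BnW zB); rewrite -wz ?wW // fE !inE eqxx ?orbT.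
  by rewrite e_sym in ewz; move: (BnW (GBe ewz zG)); rewrite wW.
pose good w := [exists f in R, (f \in M) && (w \in f)].
have allgood : forall w, w \in ends R -> good w.
  move=> w0 w0W; case: (boolP (good w0)) => // w0bad; exfalso.
  pose D := [set w in ends R | ~~ good w].
  have w0D : w0 \in D by rewrite inE w0W.
  have [par [h [Z [rZ hZ hE]]]] := rooted_ex w0 (leqnn #|[set: T]|).
  have hE' : forall x y, e x y -> (x \notin Z /\ par x = y) \/ (y \notin Z /\ par y = x).
    by move=> x y; apply: hE; rewrite inE.
  have [w wD hmax] := @arg_maxnP _ w0 (fun x => x \in D) h w0D.
  move: wD; rewrite inE => /andP[wW wbad].
  have [fM fMM wfM] := covered w wW.
  have fMR : fM \notin R.
    by apply/negP => fMR; case/negP: wbad; apply/exists_inP; exists fM; rewrite ?fMM.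
  have [fR fRR wfR] := W_R wW.
  have [m ewm fME] := edge_other (subsetP (proj1 (matchingP hMm)) _ fMM) wfM.
  have [rho ewr fRE] := edge_other (Redge fRR) wfR.
  have mr : m != rho by apply/eqP=> mr; move: fMR; rewrite fME mr -fRE fRR.
  case: (hE' _ _ ewm) => [[wZ pwm]|[mZ pmw]].
    case: (hE' _ _ ewr) => [[_ pwr]|[rZ' prw]].
      by move: mr; rewrite -pwm pwr eqxx.
    have rW : rho \in ends R by apply: (RinW fRR); rewrite fRE !inE eqxx orbT.
    have rD : rho \in D.
      rewrite inE rW /=; apply/negP => /exists_inP[f' f'R /andP[f'M rf']].
      have f'E : f' = fR by apply: (R_uniq f'R fRR rf'); rewrite fRE !inE eqxx orbT.
      by rewrite f'E in f'M; case/negP: wbad; apply/exists_inP; exists fR; rewrite // f'M wfR.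
    have := hmax _ rD; have [_] := hZ _ rZ'; rewrite prw => h1 h2.
    by have := leq_ltn_trans h2 h1; rewrite ltnn.
  have mW : m \in ends R by apply: (inside w fM m).
  have mD : m \in D.
    rewrite inE mW /=; apply/negP => /exists_inP[f' f'R /andP[f'M mf']].
    have f'E : f' = fM by apply: (same_in_matching hMm f'M fMM mf'); rewrite fME !inE eqxx orbT.
    by move: fMR; rewrite -f'E f'R.
  have := hmax _ mD; have [_] := hZ _ mZ; rewrite pmw => h1 h2.
  by have := leq_ltn_trans h2 h1; rewrite ltnn.
apply/subsetP => f fR.
have [x [y [exy fE]]] : exists x y, e x y /\ f = [set x; y].
  by case/imset2P: (Redge fR) => x y _; rewrite inE => exy ->; exists x, y.
have xf : x \in f by rewrite fE !inE eqxx.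
case/exists_inP: (allgood x (RinW fR xf)) => f' f'R /andP[f'M xf'].
by rewrite (R_uniq fR f'R xf xf').
Qed.

Lemma pos_vb : pos_vertex_backbone e = B.
Proof.
apply/setP => v; rewrite inE; apply/forallP/idP => [h|vB C].
  case/or3P: (partV v) => [//|vW|vG].
    by have [C hC vC] := W_out vW; move/implyP: (h C) => /(_ hC); rewrite (negPf vC).
  by have [C hC] := some_minC; move/implyP: (h C) => /(_ hC); rewrite (negPf (G_notin vG hC)).
by apply/implyP => hC; apply: B_in.
Qed.

Lemma neg_vb : neg_vertex_backbone e = G.
Proof.
apply/setP => v; rewrite inE; apply/forallP/idP => [h|vG C].
  case/or3P: (partV v) => [vB|vW|//].
    by have [C hC] := some_minC; move/implyP: (h C) => /(_ hC); rewrite (B_in vB hC).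
  by have [C hC vC] := W_in vW; move/implyP: (h C) => /(_ hC); rewrite vC.
by apply/implyP => hC; apply: G_notin.
Qed.

Lemma degW v : degenerate e v = (v \in ends R).
Proof.
rewrite /degenerate pos_vb neg_vb.
case/or3P: (partV v) => [vB|vW|vG].
- by rewrite vB (negPf (BnW vB)).
- apply/idP/idP => // _; apply/andP; split; apply/negP => h.
    by move: (BnW h); rewrite vW.
  by move: (GnW h); rewrite vW.
- by rewrite vG andbF (negPf (GnW vG)).
Qed.

Lemma excl_R : exclusive_edges e = R.
Proof.
apply/setP => f; rewrite inE; apply/idP/idP => [/andP[fE /andP[hdeg hC]]|fR].
  have [x [y [exy fxy]]] : exists x y, e x y /\ f = [set x; y].
    by case/imset2P: fE => x y _; rewrite inE => exy ->; exists x, y.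
  have xW : x \in ends R by rewrite -degW; move/forall_inP: hdeg; apply; rewrite fxy !inE eqxx.
  have yW : y \in ends R by rewrite -degW; move/forall_inP: hdeg; apply; rewrite fxy !inE eqxx orbT.
  apply/negPn/negP => fR; rewrite fxy in fR.
  have [C [hCm xC yC]] := W_edge xW yW exy fR.
  move/forallP: hC => /(_ C) /implyP /(_ hCm) /negP; apply.
  by rewrite fxy; apply/subsetP => z; rewrite !inE => /orP[]/eqP->.
rewrite (Redge fR) /=; apply/andP; split.
  by apply/forall_inP => v vf; rewrite degW; exact: RinW fR vf.
apply/forallP => C; apply/implyP => hCm; apply/negP => /subsetP fC.
have [x [y [exy fxy]]] : exists x y, e x y /\ f = [set x; y].
  by case/imset2P: (Redge fR) => x y _; rewrite inE => exy ->; exists x, y.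
have xf : x \in f by rewrite fxy !inE eqxx.
have yf : y \in f by rewrite fxy !inE eqxx orbT.
have xy := W_one hCm fR xf yf (fC x xf) (fC y yf).
by move: exy; rewrite xy e_irr.
Qed.

Lemma peb_R : pos_edge_backbone e = R.
Proof.
apply/setP => f; rewrite inE; apply/idP/idP => [/andP[fE hall]|fR].
  have [x [y [exy fxy]]] : exists x y, e x y /\ f = [set x; y].
    by case/imset2P: fE => x y _; rewrite inE => exy ->; exists x, y.
  have [par [h [Z rt]]] := rooted_ex x (leqnn #|[set: T]|).
  have [M [hM kM _ hP]] := phi_match rt.
  have fM : f \in M by move/forallP: hall => /(_ M) /implyP; apply; apply: maxmI.
  apply/negPn/negP => fR.
  have [b [g [bB gG _ fbg]]] := hP f fM fR.
  have [par' [h' [Z' rt']]] := rooted_ex g (leqnn #|[set: T]|).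
  have [M' [hM' kM' _ hP']] := phi_match rt'.
  have fM' : f \in M' by move/forallP: hall => /(_ M') /implyP; apply; apply: maxmI.
  have [b' [g' [b'B g'G g'g fbg']]] := hP' f fM' fR.
  have : g \in f by rewrite fbg !inE eqxx orbT.
  rewrite fbg' !inE => /orP[]/eqP gE.
    by move: (BnG b'B); rewrite -gE gG.
  by rewrite gE eqxx in g'g.
rewrite (Redge fR) /=; apply/forallP => M; apply/implyP => hM.
exact: (subsetP (R_in_max hM)).
Qed.

Lemma opt_G : optional_vertices e = G.
Proof.
apply/setP => v; rewrite inE; apply/idP/idP => [/existsP[M /andP[hM /forall_inP hv]]|vG].
  case/or3P: (partV v) => [vB|vW|//].
    have [C hC] := some_minC; have [hA _] := keyK hM hC.
    by have [f fM vf] := hA v (B_in vB hC); move: (hv f fM); rewrite vf.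
  have [C hC vC] := W_in vW; have [hA _] := keyK hM hC.
  by have [f fM vf] := hA v vC; move: (hv f fM); rewrite vf.
have [par [h [Z rt]]] := rooted_ex v (leqnn #|[set: T]|).
have [M [hM kM _ hP]] := phi_match rt.
apply/existsP; exists M; rewrite maxmI //=; apply/forall_inP => f fM.
case: (boolP (f \in R)) => fR.
  by apply/negP => vf; move: (GnW vG); rewrite (RinW fR vf).
have [b [g [bB gG gv fbg]]] := hP f fM fR.
rewrite fbg !inE negb_or; apply/andP; split.
  by apply/negP => /eqP vb; move: (BnG bB); rewrite -vb vG.
by rewrite eq_sym.
Qed.

Lemma unav_B : unavoidable_vertices e = B.
Proof.
apply/setP => v; rewrite inE.
have -> : optional e v = (v \in G) by rewrite -opt_G inE.
have -> : [exists f in pos_edge_backbone e, v \in f] = (v \in ends R).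
  by rewrite peb_R mem_ends.
case/or3P: (partV v) => [vB|vW|vG].
- by rewrite vB (negPf (BnG vB)) (negPf (BnW vB)).
- rewrite vW andbF; apply/esym/negP => vB; by move: (BnW vB); rewrite vW.
- by rewrite vG /=; apply/esym/negP => vB; move: (BnG vB); rewrite vG.
Qed.

End Char.

Lemma tri_good (B : {set T}) (R : {set {set T}}) (G : {set T}) :
  tricoloring e B R G -> cond_iii e B R G -> goodc setT B R G.
Proof.
move=> [hE [dBG [dBW [dGW hU]]]] [hD [hGB hC]]; split => //.
- by move=> x; move/setP: hU => /(_ x); rewrite !inE -orbA => ->.
- move=> x xB; apply/andP; split.
    by apply/negP => xW; move/disjointP: dBW => /(_ x xB xW).
  by apply/negP => xG; move/disjointP: dBG => /(_ x xB xG).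
- by move=> x xG; apply/negP => xW; move/disjointP: dGW => /(_ x xG xW).
- by move=> x y exy _ _; apply: hGB.
Qed.

Lemma good_tri (B : {set T}) (R : {set {set T}}) (G : {set T}) :
  goodc setT B R G -> tricoloring e B R G /\ cond_iii e B R G.
Proof.
case=> hE hP hB hG hD hGB hC; split; last first.
  by rewrite /cond_iii; split; [exact: hD | split; [move=> x y exy xG; exact: (hGB x y exy (in_setT x) (in_setT y) xG) | exact: hC]].
rewrite /tricoloring; split => //; split; [|split; [|split]].
- apply/disjointP => x xB xG; by have := hB x xB; rewrite xG andbF.
- apply/disjointP => x xB xW; by have := hB x xB; rewrite xW.
- apply/disjointP => x xG xW; by have := hG x xG; rewrite xW.
- by apply/setP => x; have := hP x; rewrite !inE -orbA => <-.
Qed.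

Lemma main_sec :
  tricoloring e (pos_vertex_backbone e) (exclusive_edges e) (neg_vertex_backbone e) /\
  tricoloring e (unavoidable_vertices e) (pos_edge_backbone e) (optional_vertices e) /\
  (exists! t : {set T} * {set {set T}} * {set T},
      tricoloring e t.1.1 t.1.2 t.2 /\ cond_iii e t.1.1 t.1.2 t.2) /\
  (forall (B : {set T}) (R : {set {set T}}) (G : {set T}),
      tricoloring e B R G -> cond_iii e B R G ->
      (B, R, G) = (pos_vertex_backbone e, exclusive_edges e, neg_vertex_backbone e)) /\
  (pos_vertex_backbone e, exclusive_edges e, neg_vertex_backbone e)
    = (unavoidable_vertices e, pos_edge_backbone e, optional_vertices e).
Proof.
have [B0 [R0 [G0 g0]]] := goodc_ex (leqnn #|[set: T]|).
have good_eq : forall B R G, tricoloring e B R G -> cond_iii e B R G ->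
    (B, R, G) = (pos_vertex_backbone e, exclusive_edges e, neg_vertex_backbone e).
  move=> B R G ht hc; have hg := tri_good ht hc.
  by rewrite (pos_vb hg) (excl_R hg) (neg_vb hg).
split; first by rewrite (pos_vb g0) (excl_R g0) (neg_vb g0); case: (good_tri g0).
split; first by rewrite (unav_B g0) (peb_R g0) (opt_G g0); case: (good_tri g0).
split.
  exists (B0, R0, G0); split; first exact: good_tri g0.
  move=> [[B R] G] /= [ht hc]; rewrite (good_eq B R G ht hc).
  by rewrite (pos_vb g0) (excl_R g0) (neg_vb g0).
split; first exact: good_eq.
by rewrite (pos_vb g0) (excl_R g0) (neg_vb g0) (unav_B g0) (peb_R g0) (opt_G g0).
Qed.

End Forest.

Theorem theorem1 (T : finType) (e : rel T)
    (e_sym : symmetric e) (e_irr : irreflexive e) (tree : is_tree e) :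
  tricoloring e (pos_vertex_backbone e) (exclusive_edges e) (neg_vertex_backbone e) /\
  tricoloring e (unavoidable_vertices e) (pos_edge_backbone e) (optional_vertices e) /\
  (exists! t : {set T} * {set {set T}} * {set T},
      tricoloring e t.1.1 t.1.2 t.2 /\ cond_iii e t.1.1 t.1.2 t.2) /\
  (forall (B : {set T}) (R : {set {set T}}) (G : {set T}),
      tricoloring e B R G -> cond_iii e B R G ->
      (B, R, G) = (pos_vertex_backbone e, exclusive_edges e, neg_vertex_backbone e)) /\
  (pos_vertex_backbone e, exclusive_edges e, neg_vertex_backbone e)
    = (unavoidable_vertices e, pos_edge_backbone e, optional_vertices e).
Proof.
case: tree => _ [_ acyc].
exact: (main_sec e_sym e_irr acyc).
Qed.
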